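(* Under the setting below, let $(x^*,z^*,s^* )$ with multiplier $\lambda^*$ for (C) (and nonnegative multipliers for the other constraints) be a KKT point of (P). Then for every $t$ with $(\beta_t,\theta_t)\in\Omega^{IV}_t(\lambda^* )$ we have $(x_t^*,z_t^* )=(x^{IV}_t(\lambda^* ),0)$, where $x^{IV}_t(\lambda)\in(0,1]$ satisfies $\theta_t u_t'(x^{IV}_t(\lambda))-\beta_t c_t e_t'(x^{IV}_t(\lambda)c_t)=d_t\lambda$, and $\Omega^{IV}_t(\lambda)=\Big\{(\beta,\theta):\beta>0,\ \theta<\frac{X_t(\lambda)}{u_t'(a_t(\beta,\lambda))},\ \theta\le\frac{\beta c_te_t'(c_t)+d_t\lambda}{u_t'(1)}\Big\}$.
   Context: Fix an integer $T\ge 1$, a data cap $Q>0$ and an overage fee $\pi>0$. For each $t\in\{1,\dots,T\}$ fix reals $d_t\ge 0$, $r_t\ge 0$, $c_t>0$, $p_t>0$, $\theta_t>0$, $\beta_t>0$ and functions $u_t,e_t:[0,\infty)\to\mathbb{R}$ such that: $u_t$ is continuous, increasing and strictly concave, differentiable on $(0,\infty)$, and $u_t':(0,\infty)\to(0,\infty)$ is a strictly decreasing bijection with inverse $u_t'^{-1}$; $e_t$ is increasing, strictly convex and continuously differentiable, and $e_t':[0,\infty)\to[0,\infty)$ is a strictly increasing bijection with inverse $e_t'^{-1}$. For $0\le z\le x\le 1$ let $\tilde f_t(x,z)=\theta_t u_t(x)-\beta_t e_t((x-z)c_t)-p_t c_t z$ and $\tilde h_t(x,z)=d_t x+r_t z$.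 Problem (P): maximize $\sum_{t=1}^T \tilde f_t(x_t,z_t)-\pi s$ over $x,z\in\mathbb{R}^T$, $s\in\mathbb{R}$, subject to $0\le z_t\le x_t\le 1$ for all $t$, $s\ge 0$, and (C): $s\ge \sum_{t=1}^T\tilde h_t(x_t,z_t)-Q$. A KKT point of (P) consists of a feasible $(x^*,z^*,s^* )$ and nonnegative Lagrange multipliers for all constraints satisfying stationarity of the Lagrangian and complementary slackness; $\lambda^*$ denotes the multiplier of (C) (the shadow price of wireless data). For $\lambda\ge 0$ and $\beta>0$ write $a_t(\beta,\lambda)=\frac{1}{c_t}\,e_t'^{-1}\!\Big(\frac{p_tc_t+r_t\lambda}{\beta c_t}\Big)$ and $X_t(\lambda)=p_tc_t+(d_t+r_t)\lambda$. *)

(* Defs.v *)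
From Stdlib Require Import Reals.
From Coquelicot Require Import Coquelicot.
Open Scope R_scope.

(* sum_upto n f = f 0 + ... + f (n-1); periods t = 1..T are indexed 0..T-1. *)
Fixpoint sum_upto (n : nat) (f : nat -> R) : R :=
  match n with
  | O => 0
  | S m => sum_upto m f + f m
  end.

Definition htil (d r : nat -> R) (t : nat) (x z : R) : R := d t * x + r t * z.

(* KKT point of problem (P), written with the Lagrangian
   L = sum_t f_t(x_t,z_t) - pi s + sum_t [mu1_t z_t + mu2_t (x_t - z_t) + mu3_t (1 - x_t)]
       + nu s + lam (s - sum_t h_t(x_t,z_t) + Q).
   du t = u_t', de t = e_t' (the derivatives; linked to u_t, e_t in the theorem).
   Since u_t is only differentiable on (0,oo), the gradient of L exists only when
   every x_t > 0; this is part of the requirement that stationarity holds. *)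
Definition is_KKT (T : nat) (Q pi : R) (d r c p theta beta : nat -> R)
  (du de : nat -> R -> R) (x z : nat -> R) (s lam : R) : Prop :=
  (forall t, (t < T)%nat -> 0 <= z t /\ z t <= x t /\ x t <= 1) /\
  0 <= s /\
  s >= sum_upto T (fun t => htil d r t (x t) (z t)) - Q /\
  0 <= lam /\
  exists (mu1 mu2 mu3 : nat -> R) (nu : R),
    0 <= nu /\
    (forall t, (t < T)%nat ->
       0 <= mu1 t /\ 0 <= mu2 t /\ 0 <= mu3 t /\
       0 < x t /\
       theta t * du t (x t) - beta t * c t * de t ((x t - z t) * c t)
         + mu2 t - mu3 t - lam * d t = 0 /\
       beta t * c t * de t ((x t - z t) * c t) - p t * c t
         + mu1 t - mu2 t - lam * r t = 0 /\
       mu1 t * z t = 0 /\ mu2 t * (x t - z t) = 0 /\ mu3 t * (1 - x t) = 0) /\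
    - pi + nu + lam = 0 /\
    nu * s = 0 /\
    lam * (s - sum_upto T (fun t => htil d r t (x t) (z t)) + Q) = 0.

Definition a_t (c p r : nat -> R) (deinv : nat -> R -> R) (t : nat) (b lam : R) : R :=
  / c t * deinv t ((p t * c t + r t * lam) / (b * c t)).

Definition X_t (c p d r : nat -> R) (t : nat) (lam : R) : R :=
  p t * c t + (d t + r t) * lam.

Definition OmegaIV (c p d r : nat -> R) (du de deinv : nat -> R -> R)
  (t : nat) (lam b th : R) : Prop :=
  b > 0 /\
  th < X_t c p d r t lam / du t (a_t c p r deinv t b lam) /\
  th <= (b * c t * de t (c t) + d t * lam) / du t 1.

(* Main.v *)
Require Import Defs.
From Stdlib Require Import Reals.
From Coquelicot Require Import Coquelicot.
From Stdlib Require Import Lra Psatz.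
Open Scope R_scope.

Theorem lemma4
  (T : nat) (HT : (1 <= T)%nat) (Q pi : R) (HQ : Q > 0) (Hpi : pi > 0)
  (d r c p theta beta : nat -> R)
  (u e du de deinv : nat -> R -> R)
  (Hd : forall t, (t < T)%nat -> d t >= 0)
  (Hr : forall t, (t < T)%nat -> r t >= 0)
  (Hc : forall t, (t < T)%nat -> c t > 0)
  (Hp : forall t, (t < T)%nat -> p t > 0)
  (Htheta : forall t, (t < T)%nat -> theta t > 0)
  (Hbeta : forall t, (t < T)%nat -> beta t > 0)
  (* u_t : continuous on [0,oo), increasing, strictly concave *)
  (Hu_cont0 : forall t, (t < T)%nat -> filterlim (u t) (at_right 0) (locally (u t 0)))
  (Hu_incr : forall t, (t < T)%nat -> forall x y, 0 <= x -> x < y -> u t x < u t y)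
  (Hu_sconc : forall t, (t < T)%nat -> forall x y l, 0 <= x -> 0 <= y -> x <> y ->
      0 < l < 1 -> u t (l * x + (1 - l) * y) > l * u t x + (1 - l) * u t y)
  (* u_t differentiable on (0,oo) with derivative du t *)
  (Hu_der : forall t, (t < T)%nat -> forall x, 0 < x -> is_derive (u t) x (du t x))
  (* u_t' : (0,oo) -> (0,oo) strictly decreasing bijection *)
  (Hdu_pos : forall t, (t < T)%nat -> forall x, 0 < x -> du t x > 0)
  (Hdu_decr : forall t, (t < T)%nat -> forall x y, 0 < x -> x < y -> du t y < du t x)
  (Hdu_surj : forall t, (t < T)%nat -> forall y, 0 < y -> exists x, 0 < x /\ du t x = y)
  (* e_t : increasing, strictly convex, continuously differentiable on [0,oo) *)
  (He_incr : forall t, (t < T)%nat -> forall x y, 0 <= x -> x < y -> e t x < e t y)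
  (He_sconv : forall t, (t < T)%nat -> forall x y l, 0 <= x -> 0 <= y -> x <> y ->
      0 < l < 1 -> e t (l * x + (1 - l) * y) < l * e t x + (1 - l) * e t y)
  (He_der : forall t, (t < T)%nat -> forall x, 0 < x -> is_derive (e t) x (de t x))
  (He_der0 : forall t, (t < T)%nat ->
      filterlim (fun h => (e t h - e t 0) / h) (at_right 0) (locally (de t 0)))
  (Hde_cont : forall t, (t < T)%nat -> forall x, 0 <= x ->
      filterlim (de t) (within (fun y => 0 <= y) (locally x)) (locally (de t x)))
  (* e_t' : [0,oo) -> [0,oo) strictly increasing bijection, with inverse deinv t *)
  (Hde_nonneg : forall t, (t < T)%nat -> forall x, 0 <= x -> de t x >= 0)
  (Hde_incr : forall t, (t < T)%nat -> forall x y, 0 <= x -> x < y -> de t x < de t y)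
  (Hdeinv : forall t, (t < T)%nat -> forall y, 0 <= y ->
      0 <= deinv t y /\ de t (deinv t y) = y)
  (* a KKT point of (P) with multiplier lam for (C) *)
  (x z : nat -> R) (s lam : R)
  (HKKT : is_KKT T Q pi d r c p theta beta du de x z s lam) :
  forall t, (t < T)%nat ->
    OmegaIV c p d r du de deinv t lam (beta t) (theta t) ->
    z t = 0 /\ 0 < x t /\ x t <= 1 /\
    theta t * du t (x t) - beta t * c t * de t (x t * c t) = d t * lam.
Proof.
  intros t Ht [Hb [H2 H3]].
  destruct HKKT as [Hfeas [_ [_ [Hlam [mu1 [mu2 [mu3 [nu [_ [Hst _]]]]]]]]]].
  destruct (Hfeas t Ht) as [Hz0 [Hzx Hx1]].
  destruct (Hst t Ht) as [Hm1 [Hm2 [Hm3 [Hx0 [Sx [Sz [C1 [C2 C3]]]]]]]].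
  pose proof (Hc t Ht) as Hct. pose proof (Hp t Ht) as Hpt.
  pose proof (Hd t Ht) as Hdt. pose proof (Hr t Ht) as Hrt.
  pose proof (Htheta t Ht) as Htt. pose proof (Hbeta t Ht) as Hbt.
  assert (Hde0 : de t 0 = 0).
  { destruct (Hdeinv t Ht 0 (Rle_refl 0)) as [Hv0 Hv].
    destruct (Rle_lt_or_eq_dec 0 (deinv t 0) Hv0) as [Hlt|Heq].
    - pose proof (Hde_incr t Ht 0 (deinv t 0) (Rle_refl 0) Hlt).
      pose proof (Hde_nonneg t Ht 0 (Rle_refl 0)). lra.
    - rewrite Heq at 1. exact Hv. }
  assert (HXpos : X_t c p d r t lam > 0).
  { unfold X_t. assert (0 < p t * c t) by (apply Rmult_lt_0_compat; lra).
    assert (0 <= (d t + r t) * lam) by (apply Rmult_le_pos; lra). lra. }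
  assert (Hz : z t = 0).
  { destruct (Rle_lt_or_eq_dec 0 (z t) Hz0) as [Hzp|Hze]; [|lra].
    exfalso.
    assert (Hmu1 : mu1 t = 0).
    { destruct (Rmult_integral _ _ C1); lra. }
    destruct (Rle_lt_or_eq_dec 0 (mu2 t) Hm2) as [Hm2p|Hm2e].
    - assert (Hxz : x t - z t = 0).
      { destruct (Rmult_integral _ _ C2); lra. }
      rewrite Hxz, Rmult_0_l, Hde0 in Sz.
      assert (0 < p t * c t) by (apply Rmult_lt_0_compat; lra).
      assert (0 <= lam * r t) by (apply Rmult_le_pos; lra). lra.
    - set (y := (p t * c t + r t * lam) / (beta t * c t)).
      assert (Hbc : 0 < beta t * c t) by (apply Rmult_lt_0_compat; lra).
      assert (Hnum : 0 < p t * c t + r t * lam).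
      { assert (0 < p t * c t) by (apply Rmult_lt_0_compat; lra).
        assert (0 <= r t * lam) by (apply Rmult_le_pos; lra). lra. }
      assert (Hy : 0 < y) by (unfold y; apply Rdiv_lt_0_compat; lra).
      destruct (Hdeinv t Ht y (Rlt_le _ _ Hy)) as [Hv0 Hv].
      set (w := (x t - z t) * c t) in *.
      assert (Hw0 : 0 <= w) by (unfold w; apply Rmult_le_pos; lra).
      assert (Hdew : de t w = y).
      { unfold y. apply (Rmult_eq_reg_l (beta t * c t)); [|lra].
        field_simplify; [|lra]. rewrite <- Hm2e in Sz. lra. }
      assert (Hwv : w = deinv t y).
      { destruct (Rtotal_order w (deinv t y)) as [Hl|[He|Hg]]; auto.
        - pose proof (Hde_incr t Ht _ _ Hw0 Hl). lra.
        - pose proof (Hde_incr t Ht _ _ Hv0 Hg). lra. }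
      assert (Hvp : 0 < deinv t y).
      { destruct (Rle_lt_or_eq_dec 0 _ Hv0) as [Hl|He]; auto.
        rewrite <- He in Hv. lra. }
      assert (Ha : a_t c p r deinv t (beta t) lam = x t - z t).
      { unfold a_t. fold y. rewrite <- Hwv. unfold w. field. lra. }
      rewrite Ha in H2.
      assert (Hap : 0 < x t - z t).
      { rewrite <- Ha. unfold a_t. fold y.
        apply Rmult_lt_0_compat; [apply Rinv_0_lt_compat|]; lra. }
      pose proof (Hdu_pos t Ht _ Hap) as Hdua.
      pose proof (Hdu_decr t Ht (x t - z t) (x t) Hap ltac:(lra)) as Hdd.
      assert (Hth : theta t * du t (x t - z t) < X_t c p d r t lam).
      { apply (Rmult_lt_compat_r (du t (x t - z t))) in H2; [|lra].
        unfold Rdiv in H2. rewrite Rmult_assoc, Rinv_l in H2; lra. }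
      assert (theta t * du t (x t) < theta t * du t (x t - z t))
        by (apply Rmult_lt_compat_l; lra).
      unfold X_t in Hth. nra. }
  assert (Hmu2 : mu2 t = 0).
  { rewrite Hz, Rminus_0_r in C2. destruct (Rmult_integral _ _ C2); lra. }
  assert (Hmu3 : mu3 t = 0).
  { destruct (Rle_lt_or_eq_dec 0 (mu3 t) Hm3) as [Hp3|He3]; [|lra].
    exfalso.
    assert (Hx : x t = 1) by (destruct (Rmult_integral _ _ C3); lra).
    rewrite Hz, Hx, Rminus_0_r, Rmult_1_l in Sx.
    pose proof (Hdu_pos t Ht 1 Rlt_0_1) as Hd1.
    apply (Rmult_le_compat_r (du t 1)) in H3; [|lra].
    unfold Rdiv in H3. rewrite Rmult_assoc, Rinv_l in H3; lra. }
  repeat split; try lra.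
  rewrite Hz, Rminus_0_r in Sx. lra.
Qed.
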